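(* Let $\gamma:=2\Delta\lambda\max\{\lambda,\mu\}$. Then for all $\mathbf x\in\mathbb R^p$, $\mathbf b\in\mathbb R^V$, $\mathbf w\in\mathbb R^E$ and all nodes $v\in V$ of depth $t$, $$|f_{\mathfrak A,v}(\mathbf x,\mathbf w,\mathbf b)|\le\gamma^t(\|\mathbf w\|_\infty+1)^t(\|\mathbf x\|_\infty+\|\mathbf b\|_\infty+1).$$
   Context: $\mathfrak A=(V,E,(\mathfrak a_v)_{v\in V})$ is an FNN architecture: $(V,E)$ is a finite dag and each $\mathfrak a_v:\mathbb R\to\mathbb R$ is Lipschitz continuous. The sources are the input nodes $X_1,\dots,X_p$, the sinks the output nodes $Y_1,\dots,Y_q$. For $\mathbf x\in\mathbb R^p$, $\mathbf w=(w_e)_{e\in E}$, $\mathbf b=(b_v)_{v\in V}$: $f_{\mathfrak A,X_i}(\mathbf x,\mathbf w,\mathbf b)=x_i$ and, for non-input $v$, $f_{\mathfrak A,v}(\mathbf x,\mathbf w,\mathbf b)=\mathfrak a_v\big(b_v+\sum_{u:uv\in E}f_{\mathfrak A,u}(\mathbf x,\mathbf w,\mathbf b)\,w_{uv}\big)$; $\mathfrak A(\mathbf x,\mathbf w,\mathbf b)=(f_{\mathfrak A,Y_1},\dots,f_{\mathfrak A,Y_q})(\mathbf x,\mathbf w,\mathbf b)$. The depth of a node is the length of the longest path from a source to it; $d$ is the depth of the dag (maximum depth of a sink); $\Delta$ is the maximum in-degree, and it is assumed that $\Delta\ge1$. $\lambda\in\mathbb N_{>0}$ is a Lipschitz constant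 of every $\mathfrak a_v$, and $\mu:=\max_{v\in V}\lceil|\mathfrak a_v(0)|\rceil$. Norms are $\ell_\infty$. *)

(* Defs.v *)
From HB Require Import structures.
From mathcomp Require Import all_boot all_order all_algebra.
From mathcomp Require Import reals.
Set Implicit Arguments. Unset Strict Implicit. Unset Printing Implicit Defensive.
Import Order.TTheory GRing.Theory Num.Theory.
Local Open Scope ring_scope.

Section FNN.
Variables (V : finType) (E : rel V).

Definition acyclic : Prop :=
  forall (u : V) (s : seq V), path E u s -> last u s = u -> s = [::].

Definition is_source (v : V) : bool := [forall u, ~~ E u v].

Definition path_from_source_len (n : nat) (v : V) : bool :=
  [exists u, exists s : n.-tuple V,
     [&& is_source u, path E u (tval s) & last u (tval s) == v]].

(* depth = length of the longest path from a source to v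
   (in a dag every path has fewer than #|V| edges) *)
Definition depth (v : V) : nat :=
  \max_(n < #|V| | path_from_source_len n v) (n : nat).

Definition max_indeg : nat := \max_(v : V) #|[set u | E u v]|.

Variables (R : realType) (p : nat) (inp : 'I_p -> V) (a : V -> R -> R).

Definition act_mu : nat := \max_(v : V) `|Num.ceil `|a v 0| |%N.

Definition norm_x (x : 'I_p -> R) : R := \big[Num.max/0]_(i < p) `|x i|.
Definition norm_b (b : V -> R) : R := \big[Num.max/0]_(v : V) `|b v|.
(* weights w_e, e = uv in E; only the values on edges are ever used *)
Definition norm_w (w : V -> V -> R) : R :=
  \big[Num.max/0]_(uv : V * V | E uv.1 uv.2) `|w uv.1 uv.2|.

Definition fnn_step (x : 'I_p -> R) (w : V -> V -> R) (b : V -> R)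
    (g : V -> R) : V -> R :=
  fun v => if [pick i | inp i == v] is Some i then x i
           else a v (b v + \sum_(u | E u v) g u * w u v).

(* f_{A,v}(x,w,b): iterating the defining equations #|V| times from 0
   gives the unique solution on a dag (values at depth t are final after
   t+1 rounds). *)
Definition fnn_eval (x : 'I_p -> R) (w : V -> V -> R) (b : V -> R) : V -> R :=
  iter #|V| (fnn_step x w b) (fun _ => 0).

End FNN.

(* Main.v *)
Require Import Defs.
From HB Require Import structures.
From mathcomp Require Import all_boot all_order all_algebra.
From mathcomp Require Import reals.
From mathcomp Require Import zify ring lra.
Import Order.TTheory GRing.Theory Num.Theory.
Local Open Scope ring_scope.
Set Implicit Arguments. Unset Strict Implicit.

Lemma acyc_uniq (V : finType) (E : rel V) : acyclic E ->
  forall s u, path E u s -> uniq (u :: s).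
Proof.
move=> hE; elim=> [|y s IH] u //= /andP[Euy ps].
have := IH y ps => /= ->; rewrite andbT.
apply/negP => uin.
have : path E u (y :: s) by rewrite /= Euy.
case: (splitPr uin) => p1 p2.
rewrite cat_path /= => /andP[p1p /andP[Elu _]].
have : path E u (rcons p1 u) by rewrite rcons_path p1p.
move/hE; rewrite last_rcons => /(_ erefl).
by case: p1 {p1p Elu}.
Qed.

Lemma acyc_size (V : finType) (E : rel V) : acyclic E ->
  forall s u, path E u s -> (size s < #|V|)%N.
Proof.
move=> hE s u ps; have := acyc_uniq hE ps.
move/card_uniqP => h; have := max_card (mem (u :: s)).
by rewrite h.
Qed.

Lemma pfsl_iff (V : finType) (E : rel V) n v :
  path_from_source_len E n v <->
  exists u s, [&& is_source E u, path E u s, last u s == v & size s == n].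
Proof.
split.
  case/existsP => u /existsP [s hs]; exists u, (tval s).
  by rewrite size_tuple eqxx andbT.
case=> u [s /and4P [h1 h2 h3 h4]].
apply/existsP; exists u; apply/existsP; exists (Tuple h4).
by rewrite /= h1 h2 h3.
Qed.

Lemma reach_src (V : finType) (E : rel V) : acyclic E ->
  forall v, exists u s, [&& is_source E u, path E u s & last u s == v].
Proof.
move=> hE v.
suff: forall k u s, path E u s -> last u s = v -> (#|V| - size s <= k)%N ->
  exists u s, [&& is_source E u, path E u s & last u s == v].
  by move/(_ #|V| v [::]); apply => //; rewrite leq_subr.
elim=> [|k IH] u s ps ls hk.
  have := acyc_size hE ps; move: hk; move: #|V| (size s) => N m; lia.
case hs: (is_source E u).
  by exists u, s; rewrite hs ps ls eqxx.
move/negbT: hs; rewrite /is_source => /forallPn [u' /negPn Eu'u].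
apply: (IH u' (u :: s)) => //=.
  by rewrite Eu'u ps.
have := acyc_size hE ps; move: hk; move: #|V| (size s) => N m; lia.
Qed.

Lemma depth_lt (V : finType) (E : rel V) v : (depth E v < #|V|)%N.
Proof.
rewrite /depth; apply: (big_ind (fun n => n < #|V|)%N).
- by apply/card_gt0P; exists v.
- by move=> a b ha hb; rewrite gtn_max ha hb.
- by move=> i _.
Qed.

Lemma depth_attained (V : finType) (E : rel V) : acyclic E ->
  forall v, path_from_source_len E (depth E v) v.
Proof.
move=> hE v.
have [u [s /and3P [h1 h2 h3]]] := reach_src hE v.
have hs := acyc_size hE h2.
have hP : path_from_source_len E (Ordinal hs) v.
  by apply/pfsl_iff; exists u, s; rewrite h1 h2 h3 eqxx.
case: (eq_bigmax_cond (fun i : 'I_#|V| => (i : nat))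
   (A := fun i : 'I_#|V| => path_from_source_len E i v)
   (ltac:(by apply/card_gt0P; exists (Ordinal hs)))) => [i0 hi0 e].
have -> : depth E v = i0 by rewrite /depth -e; apply: eq_bigl.
exact: hi0.
Qed.

Lemma depth_edge (V : finType) (E : rel V) : acyclic E ->
  forall u v, E u v -> (depth E u < depth E v)%N.
Proof.
move=> hE u v Euv.
have /pfsl_iff [u0 [s /and4P [h1 h2 h3 h4]]] := depth_attained hE u.
have hp : path E u0 (rcons s v) by rewrite rcons_path h2 (eqP h3) Euv.
have hs := acyc_size hE hp.
have : path_from_source_len E (Ordinal hs) v.
  by apply/pfsl_iff; exists u0, (rcons s v); rewrite h1 hp last_rcons eqxx eqxx.
move/(leq_bigmax_cond (P := fun i : 'I_#|V| => path_from_source_len E i v) (F := fun i : 'I_#|V| => (i : nat))) => H.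
rewrite /depth; apply: leq_trans H; by rewrite /= size_rcons (eqP h4).
Qed.

Unset Implicit Arguments. Set Strict Implicit.

Lemma bigmax_ge0 (R : realType) (I : finType) (P : pred I) (F : I -> R) :
  0 <= \big[Num.max/0]_(i | P i) `|F i|.
Proof. elim/big_ind: _ => //= x y hx hy; by rewrite le_max hx. Qed.

Lemma expr_mono (R : realType) (H : R) m n : 1 <= H -> (m <= n)%N -> H ^+ m <= H ^+ n.
Proof.
move=> H1 mn; rewrite -(subnKC mn) exprD; apply: ler_peMr.
- by apply: exprn_ge0; apply: le_trans H1.
- by apply: exprn_ege1.
Qed.

Theorem lemma6p5 (R : realType) (V : finType) (E : rel V) (p : nat)
    (inp : 'I_p -> V) (a : V -> R -> R) (lam : nat)
    (hE : acyclic E)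
    (hinp : injective inp)
    (hsrc : forall v : V, is_source E v <-> exists i : 'I_p, v = inp i)
    (hDelta : (1 <= max_indeg E)%N)
    (hlam : (0 < lam)%N)
    (hlip : forall (v : V) (s t : R), `|a v s - a v t| <= lam%:R * `|s - t|) :
  let gamma : nat := (2 * max_indeg E * lam * maxn lam (act_mu a))%N in
  forall (x : 'I_p -> R) (w : V -> V -> R) (b : V -> R) (v : V),
    `|fnn_eval E inp a x w b v|
      <= gamma%:R ^+ depth E v * (norm_w E w + 1) ^+ depth E v
         * (norm_x x + norm_b b + 1).
Proof.
move=> gamma x w b v.
set W := norm_w E w; set X := norm_x x; set B := norm_b b.
set S := X + B + 1.
set G : R := gamma%:R.
have W0 : 0 <= W by apply: bigmax_ge0.
have X0 : 0 <= X by apply: bigmax_ge0.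
have B0 : 0 <= B by apply: bigmax_ge0.
have S1 : 1 <= S by rewrite /S; lra.
have Mlam : (lam <= maxn lam (act_mu a))%N by rewrite leq_maxl.
have Mmu : (act_mu a <= maxn lam (act_mu a))%N by rewrite leq_maxr.
have G1 : 1 <= G.
  by rewrite /G /gamma ler1n !muln_gt0 /= (leq_trans hlam Mlam) hlam hDelta.
set H := G * (W + 1).
have H1 : 1 <= H by rewrite /H; nra.
have CE : forall d, G ^+ d * (W + 1) ^+ d * S = H ^+ d * S.
  by move=> d; rewrite /H exprMn.
rewrite CE.
have Cmono : forall m n, (m <= n)%N -> H ^+ m * S <= H ^+ n * S.
  move=> m n mn; rewrite ler_pM2r; last by lra.
  exact: expr_mono.
have SC : forall d, S <= H ^+ d * S.
  by move=> d; rewrite -[X in X <= _]mul1r; apply: (Cmono 0%N).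
suff: forall k v, (depth E v < k)%N ->
   `|iter k (fnn_step E inp a x w b) (fun _ => 0) v| <= H ^+ depth E v * S.
  by move/(_ #|V| v (depth_lt E v)).
elim=> [|k IH] u //= hu.
rewrite {1}/fnn_step.
case: pickP => [i /eqP hi|hnone].
  apply: le_trans (SC _); apply: le_trans (_ : X <= S); last by rewrite /S; lra.
  exact: (le_bigmax 0 (fun i => `|x i|) i).
have nsrc : ~~ is_source E u.
  apply/negP => /hsrc [i hi]; have := hnone i; by rewrite hi eqxx.
have [u1 Eu1] : exists u1, E u1 u.
  by move: nsrc => /forallPn [u1 /negPn]; exists u1.
have du := depth_edge hE Eu1.
move: du hu; case hd: (depth E u) => [//|t] _ hu.
set g := iter k _ _.
have hg : forall u0, E u0 u -> `|g u0| <= H ^+ t * S.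
  move=> u0 E0; have d0 := depth_edge hE E0; rewrite hd in d0.
  apply: le_trans (IH u0 _) _; first by lia.
  by apply: Cmono.
set s := b u + _.
have mu0 : `|a u 0| <= (act_mu a)%:R.
  apply: le_trans (ceil_ge _) _.
  have c0 : (0 <= Num.ceil `|a u 0|)%R by rewrite ceil_ge0; apply: lt_le_trans (normr_ge0 _); lra.
  rewrite -(gez0_abs c0) -natr_absz ler_nat.
  by rewrite /act_mu (bigD1 u) //= leq_maxl.
have hs0 : `|a u s| <= `|a u 0| + lam%:R * `|s|.
  have := hlip u s 0; rewrite subr0.
  have := ler_distD (a u 0) (a u s) 0.
  rewrite !subr0; lra.
set K := H ^+ t * S.
have K1 : 1 <= K by apply: le_trans (SC t).
have bB : `|b u| <= B by exact: (le_bigmax 0 (fun v => `|b v|) u).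
have hsum : `|\sum_(u0 | E u0 u) g u0 * w u0 u| <= (max_indeg E)%:R * (K * W).
  apply: le_trans (ler_norm_sum _ _ _) _.
  apply: le_trans (_ : \sum_(u0 | E u0 u) K * W <= _).
    apply: ler_sum => u0 E0; rewrite normrM; apply: ler_pM => //.
      exact: hg.
    exact: (le_bigmax_cond 0 (P := fun uv : V * V => E uv.1 uv.2) (j := (u0, u)) (fun uv => `|w uv.1 uv.2|)).
  rewrite (eq_bigl (fun u0 => u0 \in [set u0 | E u0 u])); last by move=> u0; rewrite inE.
  rewrite sumr_const -[_ *+ #|_|]mulr_natl; apply: ler_wpM2r; first by nra.
  rewrite ler_nat; exact: (leq_bigmax (F := fun v => #|[set u0 | E u0 v]|) u).
have hsb : `|s| <= B + (max_indeg E)%:R * (K * W).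
  apply: le_trans (ler_normD _ _) _; lra.
rewrite exprS -mulrA -/K /H /G /gamma !natrM.
set D : R := (max_indeg E)%:R; set L : R := lam%:R; set M : R := (maxn lam (act_mu a))%:R.
set mu : R := (act_mu a)%:R.
have D1 : 1 <= D by rewrite /D ler1n.
have L1 : 1 <= L by rewrite /L ler1n.
have LM : L <= M by rewrite /L /M ler_nat.
have muM : mu <= M by rewrite /mu /M ler_nat.
have KB : B + 1 <= K by apply: le_trans (SC t); rewrite /S; lra.
set Q := D * L * K.
have Q1 : K <= Q.
  rewrite /Q -[X in X <= _]mul1r; apply: ler_wpM2r; first lra.
  by rewrite -[1]mul1r; apply: ler_pM.
have h1 : L * (D * (K * W)) <= M * (Q * W).
  have h : 0 <= Q * W by rewrite /Q; apply: mulr_ge0 => //; apply: mulr_ge0; [apply: mulr_ge0|]; lra.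
  have -> : L * (D * (K * W)) = 1 * (Q * W) by rewrite /Q; ring.
  apply: ler_wpM2r => //; lra.
have h2 : mu + L * B <= M * Q.
  have hb : L * B <= M * B by apply: ler_wpM2r.
  have h : mu + L * B <= M * (B + 1) by rewrite mulrDr mulr1; lra.
  apply: le_trans h _; apply: ler_wpM2l; lra.
have h3 : 0 <= M * Q * W.
  apply: mulr_ge0 => //; apply: mulr_ge0; first lra.
  rewrite /Q; apply: mulr_ge0; [apply: mulr_ge0|]; lra.
apply: le_trans hs0 _.
have : `|a u 0| + L * `|s| <= mu + L * B + L * (D * (K * W)).
  have : L * `|s| <= L * (B + D * (K * W)) by apply: ler_wpM2l; lra.
  lra.
move=> h; apply: le_trans h _.
have -> : 2%:R * D * L * M * (W + 1) * K = 2 * (M * Q * W) + 2 * (M * Q) by rewrite /Q; ring.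
rewrite mulrA in h1. have hLB : 0 <= L * B by apply: mulr_ge0; lra.
have hmu : 0 <= mu by rewrite /mu ler0n.
lra.
Qed.
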